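(* Let $p\ge2$ be an integer and consider the $p$-Pass algorithm run with arbitrary orderings of $V$ in each pass. For every $1\le i\le p-1$ and every $\alpha\ge0$: if $\sum_{j=1}^ik_j\ge k\big(\frac ip+\alpha\big)$, then $$f(S_i)\ge\Big(1-\big(\tfrac{p}{p+1}\big)^i+\alpha\big(\tfrac{p}{p+1}\big)^{i+1}\Big)\mathrm{OPT}.$$
   Context: $V$ is a finite ground set with $|V|=n$; $f:2^V\to\mathbb{R}_{\ge0}$ is monotone, submodular and normalized; $f(e\mid Y)=f(Y\cup\{e\})-f(Y)$. $k\le n$ is a positive integer and $\mathrm{OPT}=\max\{f(S):S\subseteq V,|S|\le k\}$. $p$-Pass algorithm (knows $\mathrm{OPT}$): start with $S=\emptyset$; for $i=1,\dots,p$, make a pass over all elements of $V$ (in some order) and add each element $e$ to $S$ if $|S|<k$ and $f(e\mid S)\ge(\frac{p}{p+1})^i\cdot\frac{\mathrm{OPT}}{k}$; return $S$. $S_i$ denotes the set $S$ after the $i$-th pass ($S_0=\emptyset$) and $k_i=|S_i\setminus S_{i-1}|$. *)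

(* Defs.v *)
From HB Require Import structures.
From mathcomp Require Import all_boot all_order all_algebra.
Set Implicit Arguments. Unset Strict Implicit. Unset Printing Implicit Defensive.
Import Order.TTheory GRing.Theory Num.Theory.
Local Open Scope ring_scope.

Section Defs.
Variables (R : realFieldType) (V : finType).
Implicit Types (f : {set V} -> R) (S Y A B : {set V}).

Definition normalized f := f set0 = 0.
Definition nonneg f := forall S, 0 <= f S.
Definition monotone f := forall A B, A \subset B -> f A <= f B.
Definition submodular f := forall A B, f (A :|: B) + f (A :&: B) <= f A + f B.

Definition marg f (e : V) Y := f (e |: Y) - f Y.

(* OPT = max { f S : |S| <= k } (f >= 0, so 0 is a harmless neutral element) *)
Definition OPT f (k : nat) : R := \big[Num.max/0]_(S : {set V} | (#|S| <= k)%N) f S.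

Definition thr f (k p i : nat) : R := (p%:R / (p.+1)%:R) ^+ i * OPT f k / k%:R.

Definition pass_step f (k : nat) (th : R) S (e : V) : {set V} :=
  if (#|S| < k)%N && (th <= marg f e S) then e |: S else S.

Definition run_pass f k th S (s : seq V) : {set V} := foldl (pass_step f k th) S s.

Fixpoint pass_set f (k p : nat) (ords : nat -> seq V) (i : nat) : {set V} :=
  match i with
  | 0 => set0
  | i'.+1 => run_pass f k (thr f k p i'.+1) (pass_set f k p ords i') (ords i'.+1)
  end.

Definition kk f k p ords (i : nat) : nat :=
  #|pass_set f k p ords i :\: pass_set f k p ords i.-1|.
End Defs.

(* Main.v *)
Require Import Defs.
From HB Require Import structures.
From mathcomp Require Import all_boot all_order all_algebra.
From mathcomp Require Import ring lra.
Import Order.TTheory GRing.Theory Num.Theory.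
Local Open Scope ring_scope.
Set Implicit Arguments. Unset Strict Implicit.

Lemma marg_anti (R : realFieldType) (V : finType) (f : {set V} -> R) e (T U : {set V}) :
  monotone f -> submodular f -> T \subset U -> marg f e U <= marg f e T.
Proof.
move=> mon sub TU; rewrite /marg.
have := sub (e |: T) U.
have -> : (e |: T) :|: U = e |: U by rewrite -setUA (setUidPr TU).
have : f T <= f ((e |: T) :&: U) by apply: mon; rewrite subsetI subsetUr TU.
lra.
Qed.

Lemma step_sub (R : realFieldType) (V : finType) (f : {set V} -> R) k th (S : {set V}) e :
  S \subset pass_step f k th S e.
Proof. rewrite /pass_step; case: ifP => _ //; exact: subsetUr. Qed.

Lemma run_sub (R : realFieldType) (V : finType) (f : {set V} -> R) k th s (S : {set V}) :
  S \subset run_pass f k th S s.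
Proof.
elim: s S => [|e s IH] S /=; first exact: subxx.
exact: subset_trans (step_sub f k th S e) (IH _).
Qed.

Lemma run_gain (R : realFieldType) (V : finType) (f : {set V} -> R) k th s (S : {set V}) :
  0 <= th -> f S + #|run_pass f k th S s :\: S|%:R * th <= f (run_pass f k th S s).
Proof.
move=> th0; elim: s S => [|e s IH] S /=.
  by rewrite /run_pass /= setDv cards0 mul0r addr0.
have := IH (pass_step f k th S e); rewrite /run_pass /=.
set res := foldl _ _ s.
rewrite /pass_step; case: ifP => [/andP[_ hm] | _] //.
have hc : (#|res :\: S| <= #|res :\: (e |: S)| + 1)%N.
  apply: leq_trans (_ : #|e |: (res :\: (e |: S))| <= _)%N.
    apply: subset_leq_card; apply/subsetP => x; rewrite !inE.
    by case: (x == e).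
  by rewrite cardsU1 addnC leq_add2l leq_b1.
have : #|res :\: S|%:R * th <= (#|res :\: (e |: S)|%:R + 1) * th.
  by apply: ler_wpM2r => //; rewrite natr1 ler_nat -addn1.
move: hm; rewrite /marg; lra.
Qed.

Lemma run_stuck (R : realFieldType) (V : finType) (f : {set V} -> R) k th s (S : {set V}) :
  monotone f -> submodular f ->
  (#|run_pass f k th S s| < k)%N ->
  forall e, e \in s -> e \in run_pass f k th S s \/ marg f e (run_pass f k th S s) < th.
Proof.
move=> mon sub; elim: s S => [|e s IH] S //= hk x.
rewrite inE => /orP[/eqP -> | xs]; last exact: IH.
move: hk; rewrite /run_pass /=.
set res := foldl _ _ s => hk.
have Sres : pass_step f k th S e \subset res by exact: run_sub.
move: Sres; rewrite /pass_step; case: ifP => [_ Sres | ].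
  by left; apply: (subsetP Sres); rewrite setU11.
move=> /negbT; rewrite negb_and => hn Sres; right.
have hS : (#|S| < k)%N by apply: leq_ltn_trans (subset_leq_card Sres) hk.
move: hn; rewrite hS /= -ltNge => hlt.
exact: le_lt_trans (marg_anti e mon sub Sres) hlt.
Qed.
Lemma OPT_ge0 (R : realFieldType) (V : finType) (f : {set V} -> R) k : nonneg f -> 0 <= OPT f k.
Proof.
move=> nn; rewrite /OPT; elim/big_ind: _ => // x y hx hy.
by rewrite maxEle; case: ifP.
Qed.

Lemma OPT_att (R : realFieldType) (V : finType) (f : {set V} -> R) k :
  normalized f -> exists O : {set V}, (#|O| <= k)%N /\ OPT f k = f O.
Proof.
move=> nf; rewrite /OPT.
elim/big_ind: _ => [| x y [O1 [h1 e1]] [O2 [h2 e2]] | S hS].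
- by exists set0; rewrite cards0 nf.
- by rewrite maxEle; case: ifP => _; [exists O2 | exists O1].
- by exists S.
Qed.

Lemma union_bound (R : realFieldType) (V : finType) (f : {set V} -> R) (S : {set V}) th :
  monotone f -> submodular f -> (forall e, marg f e S <= th) ->
  forall A : {set V}, f (A :|: S) <= f S + #|A|%:R * th.
Proof.
move=> mon sub hm A; have [n hA] : exists n, #|A| = n by eexists.
elim: n A hA => [|n IH] A hA.
  by move/eqP: (hA); rewrite cards_eq0 => /eqP ->; rewrite set0U cards0 mul0r addr0.
have [x xA] : exists x, x \in A.
  by apply/set0Pn; rewrite -card_gt0 hA.
have hA' : #|A :\ x| = n by move: hA; rewrite (cardsD1 x A) xA add1n => -[].
have := IH _ hA'.
have := sub (x |: S) ((A :\ x) :|: S).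
have -> : (x |: S) :|: ((A :\ x) :|: S) = A :|: S.
  apply/setP => y; rewrite !inE; case: (eqVneq y x) => [-> | _] /=; first by rewrite xA ?orbT; case: (x \in S).
  by case: (y \in A); case: (y \in S).
have : f S <= f ((x |: S) :&: ((A :\ x) :|: S)).
  by apply: mon; rewrite subsetI subsetUr subsetUr.
rewrite hA -natr1 hA'; have := hm x; rewrite /marg => h1 h2 h3 h4.
lra.
Qed.
Lemma alg1 (R: realFieldType) (K P I O Q s x a Gi Gi1 q : R):
 0 < K -> 0 < P -> 0 <= O -> 0 <= Q -> 0 <= a -> q = P/(P+1) ->
 K * ((I+1)/P + a) <= s + x ->
 (1 - Q + (s/K - I/P) * (Q * q)) * O <= Gi ->
 Gi + x * (Q * q * O / K) <= Gi1 ->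
 (1 - Q*q + a * (Q*q*q)) * O <= Gi1.
Proof.
move=> K0 P0 O0 Q0 a0 hq h1 h2 h3.
have q0 : 0 <= q by rewrite hq divr_ge0 // ?ltW // addr_gt0.
have q1 : q <= 1 by rewrite hq ler_pdivrMr ?addr_gt0 // mul1r lerDl.
set D := (1 - Q + (s/K - I/P) * (Q * q)) * O + x * (Q * q * O / K) - (1 - Q*q + a * (Q*q*q)) * O.
have E : D * K = (Q*q*O) * ((s + x - K*((I+1)/P + a)) + K*a*(1-q)).
  rewrite /D hq; field. apply/and3P; split; rewrite ?lt0r_neq0 ?gt0_neq0 ?addr_gt0 //; lra.
have : 0 <= D * K.
  rewrite E mulr_ge0 ?mulr_ge0 //.
  have : 0 <= K*a*(1-q) by rewrite !mulr_ge0 ?subr_ge0 // ltW.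
  lra.
rewrite pmulr_lge0 // /D => HD.
lra.
Qed.
Lemma alg2 (R: realFieldType) (K P I O Q s x a Gi Gi1 q : R):
 0 < K -> 0 < P -> 0 <= O -> 0 <= Q -> 0 <= a -> q = P/(P+1) ->
 K * ((I+1)/P + a) <= s + x -> s < K * (I/P) ->
 (1 - Q) * O <= Gi ->
 Gi + x * (Q * q * O / K) <= Gi1 ->
 (1 - Q*q + a * (Q*q*q)) * O <= Gi1.
Proof.
move=> K0 P0 O0 Q0 a0 hq h1 h4 h2 h3.
have q0 : 0 <= q by rewrite hq divr_ge0 // ?ltW // addr_gt0.
have q1 : q <= 1 by rewrite hq ler_pdivrMr ?addr_gt0 // mul1r lerDl.
set D := (1 - Q) * O + x * (Q * q * O / K) - (1 - Q*q + a * (Q*q*q)) * O.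
have E : D * K = (Q*q*O) * ((s + x - K*((I+1)/P + a)) + (K*(I/P) - s) + K*a*(1-q)).
  rewrite /D hq; field. apply/and3P; split; rewrite ?lt0r_neq0 ?gt0_neq0 ?addr_gt0 //; lra.
have : 0 <= D * K.
  rewrite E mulr_ge0 ?mulr_ge0 //.
  have : 0 <= K*a*(1-q) by rewrite !mulr_ge0 ?subr_ge0 // ltW.
  lra.
rewrite pmulr_lge0 // /D => HD.
lra.
Qed.

Lemma passB (R : realFieldType) (V : finType) (f : {set V} -> R) k p ords m :
  nonneg f -> monotone f -> submodular f -> normalized f -> (0 < k)%N ->
  (forall j, (0 < j <= p)%N -> perm_eq (ords j) (enum V)) -> (m <= p)%N ->
  (#|pass_set f k p ords m| < k)%N ->
  (1 - (p%:R / (p.+1)%:R) ^+ m) * OPT f k <= f (pass_set f k p ords m).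
Proof.
move=> nn mon sub nf k0 hperm.
case: m => [|m] hm hk.
  by rewrite /= expr0 subrr mul0r nf.
set S := pass_set f k p ords m.+1.
set th := thr f k p m.+1.
have O0 := OPT_ge0 k nn.
have th0 : 0 <= th.
  rewrite /th /thr divr_ge0 ?mulr_ge0 ?exprn_ge0 ?divr_ge0 //.
have hmarg : forall e, marg f e S <= th.
  move=> e.
  have es : e \in ords m.+1 by rewrite (perm_mem (hperm _ _)) ?mem_enum //.
  have [eS | lt] := run_stuck mon sub hk es.
    rewrite /marg.
    have -> : e |: S = S by apply/setUidPr; rewrite sub1set.
    by rewrite subrr.
  exact: ltW.
have [O [hO eO]] := OPT_att k nf.
have h1 := union_bound mon sub hmarg O.
have h2 : f O <= f (O :|: S) by apply: mon; exact: subsetUl.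
have h3 : #|O|%:R * th <= k%:R * th by apply: ler_wpM2r => //; rewrite ler_nat.
have h4 : k%:R * th = (p%:R / (p.+1)%:R) ^+ m.+1 * OPT f k.
  rewrite /th /thr; field; by rewrite pnatr_eq0 -lt0n.
rewrite eO in h4 *.
lra.
Qed.

Lemma card_pass (R : realFieldType) (V : finType) (f : {set V} -> R) k p ords i :
  #|pass_set f k p ords i| = (\sum_(1 <= j < i.+1) kk f k p ords j)%N.
Proof.
elim: i => [|i IH]; first by rewrite big_geq //= cards0.
rewrite big_nat_recr //= -IH /kk /=.
have hs := run_sub f k (thr f k p i.+1) (ords i.+1) (pass_set f k p ords i).
rewrite (cardsDS hs) subnKC //; exact: subset_leq_card.
Qed.

Lemma main_ind (R : realFieldType) (V : finType) (f : {set V} -> R) k p ords :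
  nonneg f -> monotone f -> submodular f -> normalized f -> (0 < k)%N -> (0 < p)%N ->
  (forall j, (0 < j <= p)%N -> perm_eq (ords j) (enum V)) ->
  forall i, (i <= p)%N -> forall alpha : R, 0 <= alpha ->
  k%:R * (i%:R / p%:R + alpha) <= (\sum_(1 <= j < i.+1) kk f k p ords j)%:R ->
  (1 - (p%:R / (p.+1)%:R) ^+ i + alpha * (p%:R / (p.+1)%:R) ^+ i.+1) * OPT f k
    <= f (pass_set f k p ords i).
Proof.
move=> nn mon sub nf k0 p0 hperm.
have K0 : 0 < k%:R :> R by rewrite ltr0n.
have P0 : 0 < p%:R :> R by rewrite ltr0n.
have O0 := OPT_ge0 k nn.
set q := p%:R / (p.+1)%:R.
have hq : q = p%:R / (p%:R + 1) by rewrite /q -[in LHS]addn1 natrD.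
elim=> [|i IH] hi alpha a0.
  rewrite big_geq // mul0r add0r => h.
  have : alpha <= 0 by rewrite -(pmulr_rle0 _ K0).
  move=> ha; have -> : alpha = 0 by apply/le_anti; rewrite ha a0.
  by rewrite /= expr0 subrr !(mul0r, add0r) nf.
rewrite big_nat_recr //= natrD => h.
set s := (\sum_(1 <= j < i.+1) kk f k p ords j)%N in h IH.
set x := kk f k p ords i.+1 in h.
have hI : (i.+1)%:R = i%:R + 1 :> R by rewrite -addn1 natrD.
rewrite hI in h.
have th0 : 0 <= thr f k p i.+1.
  rewrite /thr divr_ge0 ?mulr_ge0 ?exprn_ge0 ?divr_ge0 //.
have hg := run_gain f k (ords i.+1) (pass_set f k p ords i) th0.
have hgain : f (pass_set f k p ords i) + x%:R * ((q ^+ i) * q * OPT f k / k%:R)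
   <= f (pass_set f k p ords i.+1).
  by rewrite -exprSr; exact: hg.
rewrite !exprSr.
have Q0 : 0 <= q ^+ i by rewrite exprn_ge0 // /q divr_ge0.
have [hs|hs] := @lerP R (k%:R * (i%:R / p%:R)) s%:R.
  pose beta : R := s%:R / k%:R - i%:R / p%:R.
  have b0 : 0 <= beta.
    have : beta * k%:R = s%:R - k%:R * (i%:R / p%:R).
      rewrite /beta; field; apply/andP; split; rewrite gt_eqF //.
    move=> e; rewrite -(pmulr_lge0 _ K0) e subr_ge0 //.
  have := IH (ltnW hi) beta b0.
  have -> : k%:R * (i%:R / p%:R + beta) = s%:R.
    rewrite /beta; field; apply/andP; split; rewrite gt_eqF //.
  move=> /(_ (lexx _)); rewrite exprSr => hih.
  exact: alg1 K0 P0 O0 Q0 a0 hq h hih hgain.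
have hsk : (s < k)%N.
  rewrite -(ltr_nat R); apply: lt_le_trans hs _.
  rewrite ger_pMr // ler_pdivrMr // mul1r ler_nat; exact: ltnW.
have hB := passB nn mon sub nf k0 hperm (ltnW hi).
rewrite card_pass -/s in hB.
have := hB hsk; rewrite -/q => hB'.
exact: alg2 K0 P0 O0 Q0 a0 hq h hs hB' hgain.
Qed.

Theorem mainTheorem18 (R : realFieldType) (V : finType) (f : {set V} -> R)
  (k p : nat) (ords : nat -> seq V) (i : nat) (alpha : R) :
  nonneg f -> monotone f -> submodular f -> normalized f ->
  (0 < k)%N -> (k <= #|V|)%N -> (2 <= p)%N ->
  (forall j, (0 < j <= p)%N -> perm_eq (ords j) (enum V)) ->
  (1 <= i <= p.-1)%N -> 0 <= alpha ->
  k%:R * (i%:R / p%:R + alpha) <= (\sum_(1 <= j < i.+1) kk f k p ords j)%:R ->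
  (1 - (p%:R / (p.+1)%:R) ^+ i + alpha * (p%:R / (p.+1)%:R) ^+ i.+1) * OPT f k
    <= f (pass_set f k p ords i).
Proof.
move=> nn mon sub nf k0 _ p2 hperm /andP[_ hi] a0 h.
apply: main_ind => //; first exact: leq_trans p2.
exact: leq_trans hi (leq_pred p).
Qed.
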